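(* Let $G$ be a tree with at least $2$ vertices. Then a minimum connecting transition set of $G$ has size exactly $|V(G)|-2$.
   Context: All graphs are finite, simple and undirected. A transition of a graph $G$ is an unordered pair $\{ab,bc\}$ of two distinct edges of $G$ sharing the vertex $b$ (so $a\neq c$); it is written $abc$. A walk in $G$ is a sequence $(v_1,\dots,v_k)$ of vertices with $v_iv_{i+1}\in E(G)$ for all $i\le k-1$; it leads from $v_1$ to $v_k$. For a set $T$ of transitions of $G$, a walk $(v_1,\dots,v_k)$ is $T$-compatible if for every $i\in[1,k-2]$, either $v_i=v_{i+2}$ or $v_iv_{i+1}v_{i+2}\in T$. The graph $G$ is $T$-connected, and $T$ is a connecting transition set of $G$, if for all vertices $u,v$ of $G$ there is a $T$-compatible walk leading from $u$ to $v$. A minimum connecting transition set is a connecting transition set of minimum cardinality. *)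

(* Defs.v *)
From mathcomp Require Import all_boot.
Set Implicit Arguments. Unset Strict Implicit. Unset Printing Implicit Defensive.

(* A finite simple graph is given by a vertex type T : finType and a
   symmetric irreflexive adjacency relation e : rel T. *)

Section Graphs.
Variable T : finType.
Variable e : rel T.

Definition edge_of (a b : T) : {set T} := [set a; b].

Definition trans (a b c : T) : {set {set T}} := [set edge_of a b; edge_of b c].

Definition is_transition (t : {set {set T}}) : bool :=
  [exists a, exists b, exists c,
     [&& e a b, e b c, a != c & t == trans a b c]].

Fixpoint compatible (Tr : {set {set {set T}}}) (s : seq T) : bool :=
  match s with
  | a :: ((b :: c :: _) as s') =>
      ((a == c) || (trans a b c \in Tr)) && compatible Tr s'
  | _ => true
  end.

Definition connecting (Tr : {set {set {set T}}}) : Prop :=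
  (forall t, t \in Tr -> is_transition t) /\
  forall u v : T, exists p : seq T,
    [&& path e u p, last u p == v & compatible Tr (u :: p)].

Definition min_connecting (Tr : {set {set {set T}}}) : Prop :=
  connecting Tr /\ forall Tr', connecting Tr' -> #|Tr| <= #|Tr'|.

Definition gconnected : Prop := forall x y : T, connect e x y.

Definition acyclic : Prop :=
  ~ exists (x : T) (p : seq T),
      [&& 2 <= size p, uniq (x :: p), path e x p & e (last x p) x].

Definition is_tree : Prop := gconnected /\ acyclic.

End Graphs.

(* Main.v *)
Require Import Defs.
From mathcomp Require Import all_boot.
Set Implicit Arguments. Unset Strict Implicit. Unset Printing Implicit Defensive.

Fixpoint ball (V : finType) (r : rel V) (s0 : V) (k : nat) : {set V} :=
  if k is k'.+1 then ball r s0 k' :|: [set z | [exists y in ball r s0 k', r y z]]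
  else [set s0].

Lemma ball_path (V : finType) (r : rel V) (s0 : V) p y k :
  path r y p -> y \in ball r s0 k -> last y p \in ball r s0 (k + size p).
Proof.
elim: p y k => [|z p IH] y k /=; first by rewrite addn0.
case/andP=> ryz pz yk; rewrite addnS -addSn; apply: IH => //=.
rewrite inE; apply/orP; right; rewrite inE; apply/existsP; exists y; by rewrite yk.
Qed.

Lemma dist_exists (V : finType) (r : rel V) (s0 : V) :
  exists d : V -> nat, forall x, connect r s0 x -> x != s0 ->
    exists2 y, r y x & d y < d x.
Proof.
pose s := iota 0 #|V|.
exists (fun x => find (fun k => x \in ball r s0 k) s) => x cx xs0.
have hasx : has (fun k => x \in ball r s0 k) s.
  case/connectP: cx => p pp ->.
  case: (shortenP pp) => p' pp' up' _.
  have sz : size p' < #|V|.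
    move/card_uniqP: up' => e; have := max_card (mem (s0 :: p')).
    by rewrite e.
  apply/hasP; exists (size p'); first by rewrite mem_iota.
  by have := @ball_path _ r s0 p' s0 0 pp' (set11 s0).
set m := find _ s.
have ms : m < size s by rewrite /m -has_find.
have hm := nth_find 0 hasx; rewrite -/m nth_iota ?add0n in hm; last by rewrite size_iota in ms.
case Em: m hm ms => [|m'] /= hm ms.
  by move: hm; rewrite inE (negbTE xs0).
have lt1 : m' < find (fun k => x \in ball r s0 k) s by rewrite -/m Em.
have hb := before_find 0 lt1.
rewrite nth_iota ?add0n in hb; last by rewrite size_iota in ms; apply: ltnW.
move: hm; rewrite inE hb /= inE => /existsP [y /andP [yb ryx]].
exists y => //.
rewrite ltnS leqNgt; apply/negP => lt2.
have := before_find 0 lt2; rewrite nth_iota ?add0n ?yb //.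
by rewrite size_iota in ms; apply: ltnW.
Qed.


Lemma count_conn (V : finType) (F : {set {set V}}) (S : {set V}) (s0 : V) :
  s0 \in S -> (forall x, x \in S -> connect (fun a b => [set a; b] \in F) s0 x) ->
  #|S| <= #|F| + 1.
Proof.
move=> s0S cS.
set r := (fun a b => [set a; b] \in F).
have [d hd] := dist_exists r s0.
pose pre x := odflt x [pick y | r y x && (d y < d x)].
have hpre : forall x, x \in S :\ s0 -> r (pre x) x && (d (pre x) < d x).
  move=> x; rewrite !inE => /andP [xs0 xS].
  have [y ryx dy] := hd x (cS x xS) xs0.
  rewrite /pre; case: pickP => [z //|/(_ y)]; by rewrite ryx dy.
pose h x := [set pre x; x].
have inj : {in S :\ s0 &, injective h}.
  move=> x y xS yS hxy.
  have := hpre x xS; have := hpre y yS => /andP [_ dy] /andP [_ dx].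
  have : x \in h y by rewrite -hxy /h !inE eqxx orbT.
  rewrite /h !inE => /orP [/eqP xp|/eqP //].
  have : y \in h x by rewrite hxy /h !inE eqxx orbT.
  rewrite /h !inE => /orP [/eqP yp|/eqP //].
  by move: dx dy; rewrite -xp -yp => a b; have := ltn_trans a b; rewrite ltnn.
have sub : h @: (S :\ s0) \subset F.
  apply/subsetP => z /imsetP [x xS ->]; by case/andP: (hpre x xS).
rewrite (cardsD1 s0 S) s0S add1n addn1 ltnS -(card_in_imset inj).
exact: subset_leq_card.
Qed.

Lemma edge_ofC (T : finType) (a b : T) : edge_of a b = edge_of b a.
Proof. by rewrite /edge_of setUC. Qed.

Lemma transC (T : finType) (a b c : T) : trans a b c = trans c b a.
Proof. by rewrite /trans setUC (edge_ofC a b) (edge_ofC b c). Qed.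

Fixpoint uses (T : finType) (f : {set T}) (s : seq T) : bool :=
  match s with
  | x :: ((y :: _) as s') => (edge_of x y == f) || uses f s'
  | _ => false
  end.

Lemma walk_conn (T : finType) (Tr : {set {set {set T}}}) s x y g :
  compatible Tr (x :: y :: s) -> uses g (x :: y :: s) ->
  connect (fun f g => [set f; g] \in Tr) (edge_of x y) g.
Proof.
elim: s x y => [|z s IH] x y /=.
  by rewrite orbF => _ /eqP ->.
case/andP=> hxyz hc /orP [/eqP -> //|hu].
apply: connect_trans (IH _ _ hc hu).
case/orP: hxyz => [/eqP ->|ht]; first by rewrite edge_ofC.
exact: connect1.
Qed.

Lemma cross (T : finType) (e : rel T) f (sa : pred T) :
  (forall x y, e x y -> edge_of x y != f -> sa x = sa y) ->
  forall p u, path e u p -> sa u != sa (last u p) -> uses f (u :: p).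
Proof.
move=> hs; elim=> [|y p IH] u /=; first by rewrite eqxx.
case/andP=> euy py hne; case: eqP => //= /eqP hf.
by apply: IH => //; rewrite -(hs _ _ euy hf).
Qed.

Lemma side_sep (T : finType) (e : rel T) (e_sym : symmetric e) (e_irr : irreflexive e)
  (acyc : acyclic e) a b : e a b ->
  ~~ connect (fun x y => e x y && (edge_of x y != edge_of a b)) a b.
Proof.
move=> eab; apply/negP => /connectP [p pp lastp].
case: (shortenP pp) lastp => p' pp' up' _ lastp.
case: p' pp' up' lastp => [|z [|w q]] pp' up' /= lastp.
- by move: eab; rewrite lastp e_irr.
- by move: pp'; rewrite /= -lastp eqxx !andbF.
- apply: acyc; exists a, [:: z, w & q]; apply/and4P; split => //.
  + by apply: (sub_path _ pp') => u v /andP [].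
  + by rewrite /= -lastp e_sym.
Qed.

Lemma side_prop (T : finType) (e : rel T) (e_sym : symmetric e) f a x y :
  e x y -> edge_of x y != f ->
  connect (fun x y => e x y && (edge_of x y != f)) a x =
  connect (fun x y => e x y && (edge_of x y != f)) a y.
Proof.
move=> exy hf; set ef := (fun x y => _).
have hxy : ef x y by rewrite /ef /= exy hf.
have hyx : ef y x by rewrite /ef /= e_sym edge_ofC exy hf.
apply/idP/idP => h; [exact: connect_trans h (connect1 hxy)|exact: connect_trans h (connect1 hyx)].
Qed.

Lemma Econn (T : finType) (e : rel T) (e_sym : symmetric e) (e_irr : irreflexive e)
  (acyc : acyclic e) (Tr : {set {set {set T}}})
  (hc : forall u v : T, exists p : seq T,
    [&& path e u p, last u p == v & compatible Tr (u :: p)]) a b c d :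
  e a b -> e c d ->
  connect (fun f g => [set f; g] \in Tr) (edge_of a b) (edge_of c d).
Proof.
move=> eab ecd.
have [->|fg] := eqVneq (edge_of a b) (edge_of c d); first exact: connect0.
set f := edge_of a b in fg *; set g := edge_of c d in fg *.
pose sa := connect (fun x y => e x y && (edge_of x y != f)) a.
pose sc := connect (fun x y => e x y && (edge_of x y != g)) c.
have hsa : forall x y, e x y -> edge_of x y != f -> sa x = sa y.
  by move=> x y; apply: side_prop.
have hsc : forall x y, e x y -> edge_of x y != g -> sc x = sc y.
  by move=> x y; apply: side_prop.
have saa : sa a by exact: connect0.
have sab : sa b = false by apply/negbTE; apply: side_sep.
have scc : sc c by exact: connect0.
have scd : sc d = false by apply/negbTE; apply: side_sep.
have sacd : sa c = sa d by apply: hsa; rewrite // eq_sym.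
have scab : sc a = sc b by apply: hsc.
pose u := if sa c then b else a.
pose v := if sc a then d else c.
have [p /and3P [pp /eqP lp cp]] := hc u v.
have uf : uses f (u :: p).
  apply: (cross hsa pp); rewrite lp /u /v.
  have -> : sa (if sc a then d else c) = sa c by case: (sc a).
  by case: (sa c); rewrite ?sab ?saa.
have ug : uses g (u :: p).
  apply: (cross hsc pp); rewrite lp /u /v.
  have -> : sc (if sa c then b else a) = sc a by case: (sa c).
  by case: (sc a); rewrite ?scd ?scc.
case: p pp lp cp uf ug => [|y s] //= pp lp cp uf ug.
have h1 := walk_conn cp uf; have h2 := walk_conn cp ug.
have hr : symmetric (fun f g : {set T} => [set f; g] \in Tr) by move=> x z; rewrite setUC.
by apply: connect_trans h2; rewrite (sym_connect_sym hr).
Qed.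

Lemma lower (T : finType) (e : rel T) (e_sym : symmetric e) (e_irr : irreflexive e)
  (tree : is_tree e) (two : 2 <= #|T|) (Tr : {set {set {set T}}}) :
  connecting e Tr -> #|T| <= #|Tr| + 2.
Proof.
case: tree => gc acyc [_ hc].
have [x [y [_ _ xy]]] := card_gt1P two.
have : connect e x y := gc x y.
case/connectP => [[|z q] /=]; first by move=> _ yx; rewrite yx eqxx in xy.
case/andP => exz _ _.
pose E := [set edge_of p.1 p.2 | p in [set p : T * T | e p.1 p.2]].
have inE_ a b : e a b -> edge_of a b \in E.
  by move=> eab; apply/imsetP; exists (a, b); rewrite ?inE.
have h1 : #|[set: T]| <= #|E| + 1.
  apply: (count_conn (s0 := x)) => // w _.
  apply: (connect_sub _ (gc x w)) => a b eab; apply: connect1; exact: inE_.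
have h2 : #|E| <= #|Tr| + 1.
  apply: (count_conn (s0 := edge_of x z)); first exact: inE_.
  move=> g /imsetP [[c d]]; rewrite inE /= => ecd ->.
  exact: Econn.
rewrite cardsT in h1.
apply: leq_trans h1 _; rewrite -[2]/(1 + 1) addnA leq_add2r; exact: h2.
Qed.

Definition astep (T : finType) (e : rel T) (Tr : {set {set {set T}}}) : rel (T * T) :=
  fun A B => [&& e A.1 A.2, A.2 == B.1, e B.1 B.2 &
                 (A.1 == B.2) || (trans A.1 A.2 B.2 \in Tr)].

Lemma arc_walk (T : finType) (e : rel T) (Tr : {set {set {set T}}}) s (A : T * T) :
  e A.1 A.2 -> path (astep e Tr) A s ->
  [&& path e A.1 (A.2 :: map snd s), last A.1 (A.2 :: map snd s) == (last A s).2
    & compatible Tr (A.1 :: A.2 :: map snd s)].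
Proof.
elim: s A => [|[b1 b2] s IH] [a1 a2] eA.
  by move=> _; rewrite /= eA eqxx.
move=> /andP [H ps]; rewrite /astep /= in H; case/and4P: H => _ /eqP a2b eB hc.
have := IH (b1, b2) eB ps; rewrite -a2b in eB hc * => /and3P [p1 p2 p3].
set l := map snd s in p1 p2 p3 *.
have cE : compatible Tr (a1 :: a2 :: b2 :: l) =
  ((a1 == b2) || (trans a1 a2 b2 \in Tr)) && compatible Tr (a2 :: b2 :: l) by [].
have pE : path e a1 (a2 :: b2 :: l) = e a1 a2 && path e a2 (b2 :: l) by [].
have lE : last a1 (a2 :: b2 :: l) = last a2 (b2 :: l) by [].
by rewrite cE pE lE eA p1 p2 hc p3.
Qed.

Lemma arc_back (T : finType) (e : rel T) (e_sym : symmetric e) Tr (A : T * T) :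
  e A.1 A.2 -> astep e Tr A (A.2, A.1).
Proof. by move=> eA; rewrite /astep /=; apply/and4P; split; rewrite ?eqxx // e_sym. Qed.

Lemma arc_rev (T : finType) (e : rel T) (e_sym : symmetric e) Tr (A B : T * T) :
  connect (astep e Tr) A B -> connect (astep e Tr) (B.2, B.1) (A.2, A.1).
Proof.
case/connectP => s ps ->.
elim: s A ps => [|C s IH] A /=; first by move=> _; exact: connect0.
case/andP => hAC ps; apply: connect_trans (IH _ ps) _; apply: connect1.
case/and4P: hAC => eA /eqP ac eC hc.
rewrite /astep /=; apply/and4P; split.
- by rewrite e_sym.
- by rewrite ac.
- by rewrite e_sym.
- by rewrite eq_sym transC -ac.
Qed.

Lemma arc_connecting (T : finType) (e : rel T) (e_sym : symmetric e) Tr (A0 : T * T)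
  (eA0 : e A0.1 A0.2) (arc : T -> T * T)
  (harc : forall u, [/\ (arc u).1 = u, e (arc u).1 (arc u).2 &
                        connect (astep e Tr) (arc u) A0]) :
  forall u v, exists p, [&& path e u p, last u p == v & compatible Tr (u :: p)].
Proof.
move=> u v.
have [hu1 hu2 hu3] := harc u; have [hv1 hv2 hv3] := harc v.
have c1 : connect (astep e Tr) (arc u) ((arc v).2, (arc v).1).
  apply: connect_trans hu3 _; apply: connect_trans (arc_rev e_sym hv3).
  exact/connect1/arc_back.
case/connectP: c1 => s ps lst.
have := arc_walk hu2 ps; rewrite -lst /= hu1 hv1 => H.
by exists ((arc u).2 :: map snd s).
Qed.

Lemma upper (T : finType) (e : rel T) (e_sym : symmetric e) (e_irr : irreflexive e)
  (gc : gconnected e) (two : 2 <= #|T|) :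
  exists Tr0, connecting e Tr0 /\ #|Tr0| <= #|T| - 2.
Proof.
have [rho [y [_ _ xy]]] := card_gt1P two.
have [d hd] := dist_exists e rho.
pose par w := odflt w [pick z | e z w && (d z < d w)].
have hpar : forall w, w != rho -> e (par w) w && (d (par w) < d w).
  move=> w wr; have [z ezw dz] := hd w (gc rho w) wr.
  rewrite /par; case: pickP => [z' //|/(_ z)]; by rewrite ezw dz.
have yr : y != rho by rewrite eq_sym.
have [c0 c0r pc0] : exists2 c0, c0 != rho & par c0 = rho.
  case: (@arg_minnP _ y (fun w => w != rho) d yr) => c0 c0r hmin.
  exists c0 => //; apply/eqP; apply/negP => /negP pr.
  have := hmin _ pr; case/andP: (hpar c0 c0r) => _ h.
  by rewrite leqNgt h.
have ec0 : e rho c0 by case/andP: (hpar c0 c0r); rewrite pc0.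
pose ref b := if b == rho then c0 else par b.
pose gg w := trans (ref (par w)) (par w) w.
pose D := [set: T] :\ rho :\ c0.
exists (gg @: D); split; last first.
  apply: leq_trans (leq_imset_card _ _) _.
  have := cardsD1 rho [set: T]; rewrite in_setT cardsT => ->.
  rewrite (cardsD1 c0 ([set: T] :\ rho)) !inE c0r /=.
  by rewrite add1n addSn subSS subn1.
split.
  move=> t /imsetP [w]; rewrite !inE andbT => /andP [wc0 wr] ->.
  have [ep dp] := andP (hpar w wr).
  apply/existsP; exists (ref (par w)); apply/existsP; exists (par w).
  apply/existsP; exists w; rewrite /gg eqxx ep andbT /ref.
  case: eqP => [pr|/eqP pr].
    by rewrite pr e_sym ec0 eq_sym wc0.
  have [epp dpp] := andP (hpar _ pr).
  rewrite epp /=; apply/eqP => ppw.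
  by move: dpp; rewrite ppw => /(ltn_trans dp); rewrite ltnn.
pose arc u := if u == rho then (rho, c0) else (u, par u).
have up : forall n u, d u <= n -> u != rho ->
    connect (astep e (gg @: D)) (u, par u) (rho, c0).
  elim=> [|n IH] u du ur; have [ep dp] := andP (hpar u ur).
    by move: (leq_trans dp du).
  have uD : u \in D -> trans (ref (par u)) (par u) u \in gg @: D by move=> h; exact: imset_f.
  case: (eqVneq (par u) rho) => pr.
    case: (eqVneq u c0) => uc0.
      apply: connect1; rewrite /astep /= uc0 pc0 eqxx e_sym ec0 /=.
      by rewrite eqxx.
    apply: connect1; rewrite /astep /= pr eqxx e_sym -pr ep /=.
    rewrite pr ec0 transC; apply/orP; right.
    have uD' : u \in D by rewrite !inE; apply/and3P; split.
    by have := uD uD'; rewrite /ref pr eqxx.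
  apply: connect_trans (IH _ _ pr); last first.
    by rewrite -ltnS; apply: leq_trans dp du.
  have [epp dpp] := andP (hpar _ pr).
  apply: connect1; rewrite /astep /= eqxx e_sym ep e_sym epp /=.
  rewrite transC; apply/orP; right.
  have uD' : u \in D.
    rewrite !inE; apply/and3P; split => //; apply/negP => /eqP uc0.
    by rewrite uc0 pc0 eqxx in pr.
  by have := uD uD'; rewrite /ref (negbTE pr).
apply: (@arc_connecting T e e_sym (gg @: D) (rho, c0) ec0 arc) => u.
rewrite /arc; case: (eqVneq u rho) => [->|ur]; rewrite ?eqxx ?(negbTE ur); split => //.
all: try exact: connect0.
- by rewrite /= e_sym; case/andP: (hpar u ur).
- exact: up (leqnn _) ur.
Qed.

Theorem lemma1 (T : finType) (e : rel T)
  (e_sym : symmetric e) (e_irr : irreflexive e)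
  (tree : is_tree e) (two : 2 <= #|T|)
  (Tr : {set {set {set T}}}) (hmin : min_connecting e Tr) :
  #|Tr| = #|T| - 2.
Proof.
case: hmin => hc hm.
have lo := lower e_sym e_irr tree two hc.
have [Tr0 [c0 s0]] := upper e_sym e_irr (proj1 tree) two.
have := hm _ c0 => h.
apply/eqP; rewrite eqn_leq (leq_trans h s0) /=.
by rewrite leq_subLR addnC.
Qed.
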